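(* Let $x,y\ge 1$, $n\ge\max(x,y)$, and let $G$ be a minimal $(x,y)$ task-dependency graph of order $n$. Then $G$ has the maximum possible number of edges among all minimal $(x,y)$ task-dependency graphs of order $n$ if and only if $G$ has at most two components that are not isolated vertices, and (1) if $G$ consists of all isolated vertices, then $n=x=y$; (2) if $G$ has two components that are not isolated vertices, then $G$ has no interior vertex; and (3) if $G$ has exactly one component $C$ that is not an isolated vertex, then either (a) $C$ has no interior vertex; (b) there exist an initial vertex $u$, a terminal vertex $v$, and multiple interior vertices in $C$ such that all interior vertices of $C$ are adjacent to both $u$ and $v$, where $u$ may be adjacent to more terminal vertices and $v$ may be adjacent to more initial vertices; or (c) $C$ has exactly one interior vertex, which is adjacent to $p>0$ initial vertices and $q>0$ terminal vertices; if $p=1$ this initial vertex may be adjacent to more terminal vertices; if $q=1$ this terminal vertex may be adjacent to more initial vertices; if $p>1$ these initial vertices are adjacent only to the interior vertex; if $q>1$ these terminal vertices are adjacent only to the interior vertex.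
   Context: A task-dependency graph is a finite directed acyclic graph (no loops, no multiple edges). A vertex is initial if it has in-degree $0$, terminal if it has out-degree $0$ (an isolated vertex is both), exterior if it is initial or terminal, and interior otherwise. An $(x,y)$ task-dependency graph has exactly $x$ initial and $y$ terminal vertices; it is minimal if removing any single edge produces a graph that is not an $(x,y)$ task-dependency graph. Components are connected components of the underlying undirected graph; two vertices are adjacent if there is an edge between them in either direction. The order is the number of vertices. *)

(* Defs.v *)
(* A task-dependency graph of order n has vertex set 'I_n and
   a set of directed edges E : {set 'I_n * 'I_n} (so no multiple edges). *)
From mathcomp Require Import all_boot.
Set Implicit Arguments. Unset Strict Implicit. Unset Printing Implicit Defensive.

Section TDG.
Variable n : nat.
Implicit Types (E : {set 'I_n * 'I_n}) (v : 'I_n).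

Definition erel E : rel 'I_n := fun u v => (u, v) \in E.

(* acyclic: no directed cycle (this also excludes loops) *)
Definition acyclic E : Prop := forall u v, (u, v) \in E -> ~~ connect (erel E) v u.

Definition initial E v : bool := [forall u, (u, v) \notin E].
Definition terminal E v : bool := [forall w, (v, w) \notin E].
Definition interior E v : bool := ~~ initial E v && ~~ terminal E v.

Definition ninitial E : nat := #|[set v | initial E v]|.
Definition nterminal E : nat := #|[set v | terminal E v]|.

Definition tdg (x y : nat) E : Prop :=
  acyclic E /\ ninitial E = x /\ nterminal E = y.

Definition minimal_tdg (x y : nat) E : Prop :=
  tdg x y E /\ forall e, e \in E -> ~ tdg x y (E :\ e).

Definition adj E : rel 'I_n := fun u v => ((u, v) \in E) || ((v, u) \in E).

Definition isolated E v : bool := [forall w, ~~ adj E v w].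

Definition comp E v : {set 'I_n} := [set w | connect (adj E) v w].

Definition nontriv_comps E : {set {set 'I_n}} :=
  [set comp E v | v in [set v | ~~ isolated E v]].

End TDG.

(* Main.v *)
Require Import Defs.
From mathcomp Require Import all_boot zify.
Set Implicit Arguments. Unset Strict Implicit. Unset Printing Implicit Defensive.


Section G.
Variable n : nat.
Variable E : {set 'I_n * 'I_n}.

Definition outdeg (a : 'I_n) := #|[set w | (a, w) \in E]|.
Definition indeg (b : 'I_n) := #|[set u | (u, b) \in E]|.

Lemma terminalP v : reflect (forall w, (v, w) \notin E) (terminal E v).
Proof. exact: forallP. Qed.
Lemma initialP v : reflect (forall u, (u, v) \notin E) (initial E v).
Proof. exact: forallP. Qed.

Lemma nterminalP v : reflect (exists w, (v, w) \in E) (~~ terminal E v).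
Proof.
apply: (iffP forallPn) => [[w]|[w Hw]]; rewrite ?negbK; first by exists w.
by exists w; rewrite negbK.
Qed.
Lemma ninitialP v : reflect (exists u, (u, v) \in E) (~~ initial E v).
Proof.
apply: (iffP forallPn) => [[w]|[w Hw]]; rewrite ?negbK; first by exists w.
by exists w; rewrite negbK.
Qed.

Lemma terminal_out v : terminal E v = (outdeg v == 0).
Proof.
rewrite /outdeg cards_eq0; apply/idP/idP => [/terminalP H|/eqP H].
  by apply/eqP/setP => w; rewrite !inE (negbTE (H w)).
apply/terminalP => w; apply/negP => Hw.
have : w \in [set w | (v, w) \in E] by rewrite inE.
by rewrite H inE.
Qed.
Lemma initial_in v : initial E v = (indeg v == 0).
Proof.
rewrite /indeg cards_eq0; apply/idP/idP => [/initialP H|/eqP H].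
  by apply/eqP/setP => w; rewrite !inE (negbTE (H w)).
apply/initialP => w; apply/negP => Hw.
have : w \in [set w | (w, v) \in E] by rewrite inE.
by rewrite H inE.
Qed.

Lemma out1_uniq a b c : outdeg a = 1 -> (a, b) \in E -> (a, c) \in E -> b = c.
Proof.
move=> H Hb Hc; have /card_le1_eqP H1 : outdeg a <= 1 by rewrite H.
by apply: H1; rewrite inE.
Qed.
Lemma in1_uniq a b c : indeg a = 1 -> (b, a) \in E -> (c, a) \in E -> b = c.
Proof.
move=> H Hb Hc; have /card_le1_eqP H1 : indeg a <= 1 by rewrite H.
by apply: H1; rewrite inE.
Qed.
Lemma out2 a b c : (a, b) \in E -> (a, c) \in E -> b != c -> 1 < outdeg a.
Proof.
move=> Hb Hc Hbc; rewrite /outdeg.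
have <- : #|[set b; c]| = 2 by rewrite cards2 Hbc.
by apply: subset_leq_card; apply/subsetP => z; rewrite !inE => /orP [] /eqP ->.
Qed.
Lemma in2 a b c : (b, a) \in E -> (c, a) \in E -> b != c -> 1 < indeg a.
Proof.
move=> Hb Hc Hbc; rewrite /indeg.
have <- : #|[set b; c]| = 2 by rewrite cards2 Hbc.
by apply: subset_leq_card; apply/subsetP => z; rewrite !inE => /orP [] /eqP ->.
Qed.
Lemma out_pos a b : (a, b) \in E -> 0 < outdeg a.
Proof. by move=> H; rewrite lt0n -terminal_out; apply/nterminalP; exists b. Qed.
Lemma in_pos a b : (b, a) \in E -> 0 < indeg a.
Proof. by move=> H; rewrite lt0n -initial_in; apply/ninitialP; exists b. Qed.
Lemma out_other a b : 1 < outdeg a -> exists c, (a, c) \in E /\ c != b.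
Proof.
move=> H; case: (boolP ([set w | (a, w) \in E] \subset [set b])) => Hs.
  by move: (subset_leq_card Hs); rewrite cards1 -/(outdeg a); lia.
case/subsetPn: Hs => c; rewrite !inE => Hc Hcb; by exists c.
Qed.
Lemma in_other a b : 1 < indeg a -> exists c, (c, a) \in E /\ c != b.
Proof.
move=> H; case: (boolP ([set w | (w, a) \in E] \subset [set b])) => Hs.
  by move: (subset_leq_card Hs); rewrite cards1 -/(indeg a); lia.
case/subsetPn: Hs => c; rewrite !inE => Hc Hcb; by exists c.
Qed.

Definition interior_of u v w : (u, v) \in E -> (v, w) \in E -> interior E v.
Proof.
move=> H1 H2; rewrite /interior; apply/andP; split.
  by apply/ninitialP; exists u.
by apply/nterminalP; exists w.
Qed.

Definition itemT := ('I_n + 'I_n + ('I_n * 'I_n))%type.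
Definition Dout (a : 'I_n) : itemT := inl (inl a).
Definition Din (a : 'I_n) : itemT := inl (inr a).
Definition Ed (e : 'I_n * 'I_n) : itemT := inr e.

Definition item_ok (it : itemT) : bool :=
  match it with
  | inl (inl a) => 1 < outdeg a
  | inl (inr b) => 1 < indeg b
  | inr e => [&& e \in E, outdeg e.1 == 1 & indeg e.2 == 1]
  end.
Definition Items := [set it | item_ok it].
Definition anchor (it : itemT) : 'I_n :=
  match it with inl (inl a) => a | inl (inr b) => b | inr e => e.1 end.

Lemma card_sum (T1 T2 : finType) (A : {set (T1 + T2)%type}) :
  #|A| = #|[set a | inl a \in A]| + #|[set b | inr b \in A]|.
Proof.
set A1 := [set a | inl a \in A]; set A2 := [set b | inr b \in A].
have HA : A = inl @: A1 :|: inr @: A2.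
  apply/setP => [[a|b]]; rewrite !inE.
    apply/idP/orP => [H|[]]; first by left; apply/imsetP; exists a; rewrite ?inE.
      by case/imsetP => a'; rewrite inE => H [->].
    by case/imsetP.
  apply/idP/orP => [H|[]]; first by right; apply/imsetP; exists b; rewrite ?inE.
    by case/imsetP.
  by case/imsetP => a'; rewrite inE => H [->].
have := cardsUI (inl @: A1) (inr @: A2).
have -> : inl @: A1 :&: inr @: A2 = set0.
  apply/setP => z; rewrite !inE; apply/andP => [[/imsetP [a _ ->] /imsetP [b _]]] //.
rewrite cards0 addn0 !card_imset -?HA //.
  by move=> a b [].
by move=> a b [].
Qed.

Lemma card_Items :
  #|Items| = #|[set a | 1 < outdeg a]| + #|[set b | 1 < indeg b]|
             + #|[set e in E | (outdeg e.1 == 1) && (indeg e.2 == 1)]|.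
Proof.
rewrite card_sum (card_sum [set a | inl a \in Items]).
congr (_ + _ + _); apply: eq_card => z; by rewrite !inE.
Qed.

Lemma card_out1 : #|[set e in E | outdeg e.1 == 1]| = #|[set a | outdeg a == 1]|.
Proof.
rewrite -(card_in_imset (f := fst)).
  apply: eq_card => a; rewrite inE; apply/imsetP/idP.
    by case=> e; rewrite inE => /andP [_ /eqP H] ->; rewrite H.
  move=> /eqP H; have : 0 < outdeg a by rewrite H.
  rewrite lt0n -terminal_out => /nterminalP [w Hw].
  by exists (a, w); rewrite // inE Hw H.
move=> [a b] [a' b']; rewrite !inE /= => /andP [H1 /eqP H2] /andP [H3 _] Ha.
subst a'; by rewrite (out1_uniq H2 H1 H3).
Qed.
Lemma card_in1 : #|[set e in E | indeg e.2 == 1]| = #|[set a | indeg a == 1]|.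
Proof.
rewrite -(card_in_imset (f := snd)).
  apply: eq_card => a; rewrite inE; apply/imsetP/idP.
    by case=> e; rewrite inE => /andP [_ /eqP H] ->; rewrite H.
  move=> /eqP H; have : 0 < indeg a by rewrite H.
  rewrite lt0n -initial_in => /ninitialP [w Hw].
  by exists (w, a); rewrite // inE Hw H.
move=> [a b] [a' b']; rewrite !inE /= => /andP [H1 /eqP H2] /andP [H3 _] Ha.
subst b'; by rewrite (in1_uniq H2 H1 H3).
Qed.

Lemma card_nonterm :
  #|[set a | outdeg a == 1]| + #|[set a | 1 < outdeg a]| = n - nterminal E.
Proof.
rewrite /nterminal.
have H := cardsC [set v | terminal E v]; rewrite card_ord in H.
have -> : n - #|[set v | terminal E v]| = #|~: [set v | terminal E v]| by lia.
rewrite -cardsUI.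
have -> : [set a | outdeg a == 1] :&: [set a | 1 < outdeg a] = set0.
  by apply/setP => a; rewrite !inE; case: eqP => // ->.
rewrite cards0 addn0; apply: eq_card => a; rewrite !inE terminal_out.
by case: (outdeg a) => [|[|k]].
Qed.
Lemma card_noninit :
  #|[set a | indeg a == 1]| + #|[set a | 1 < indeg a]| = n - ninitial E.
Proof.
rewrite /ninitial.
have H := cardsC [set v | initial E v]; rewrite card_ord in H.
have -> : n - #|[set v | initial E v]| = #|~: [set v | initial E v]| by lia.
rewrite -cardsUI.
have -> : [set a | indeg a == 1] :&: [set a | 1 < indeg a] = set0.
  by apply/setP => a; rewrite !inE; case: eqP => // ->.
rewrite cards0 addn0; apply: eq_card => a; rewrite !inE initial_in.
by case: (indeg a) => [|[|k]].
Qed.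

Definition minprop := forall a b, (a, b) \in E -> outdeg a = 1 \/ indeg b = 1.

Lemma count_identity : minprop ->
  #|E| + #|Items| = (n - nterminal E) + (n - ninitial E).
Proof.
move=> Hm.
have HU : [set e in E | outdeg e.1 == 1] :|: [set e in E | indeg e.2 == 1] = E.
  apply/setP => [[a b]]; rewrite !inE /=.
  case He: ((a, b) \in E) => //=; case: (Hm _ _ He) => ->; by rewrite eqxx ?orbT.
have HI : [set e in E | outdeg e.1 == 1] :&: [set e in E | indeg e.2 == 1]
          = [set e in E | (outdeg e.1 == 1) && (indeg e.2 == 1)].
  by apply/setP => e; rewrite !inE; case: (e \in E).
have := cardsUI [set e in E | outdeg e.1 == 1] [set e in E | indeg e.2 == 1].
rewrite HU HI card_out1 card_in1 => H.
rewrite card_Items -card_nonterm -card_noninit; lia.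
Qed.


Lemma noloop : acyclic E -> forall a, (a, a) \notin E.
Proof. by move=> Hac a; apply/negP => H; move: (Hac _ _ H); rewrite connect0. Qed.
Lemma no2cycle : acyclic E -> forall a b, (a, b) \in E -> (b, a) \in E -> False.
Proof.
move=> Hac a b H1 H2; move: (Hac _ _ H1); rewrite connect1 //.
Qed.

Lemma items_edge a b : (a, b) \in E ->
  exists2 it, it \in Items & [\/ it = Dout a, it = Din b | it = Ed (a, b)].
Proof.
move=> H.
case: (ltnP 1 (outdeg a)) => Ho.
  by exists (Dout a); [rewrite inE | constructor 1].
case: (ltnP 1 (indeg b)) => Hi.
  by exists (Din b); [rewrite inE | constructor 2].
exists (Ed (a, b)); last by constructor 3.
have := out_pos H; have := in_pos H.
rewrite inE /= H /=; move=> h1 h2; apply/andP; split; apply/eqP; lia.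
Qed.

Lemma Items_empty : E = set0 -> #|Items| = 0.
Proof.
move=> HE; apply/eqP; rewrite cards_eq0; apply/eqP/setP => [[[a|b]|e]];
  rewrite !inE /=.
- by rewrite /outdeg HE (_ : [set w | _] = set0) ?cards0 //; apply/setP => w; rewrite !inE.
- by rewrite /indeg HE (_ : [set w | _] = set0) ?cards0 //; apply/setP => w; rewrite !inE.
- by rewrite HE inE.
Qed.

Lemma Items_nonempty a b : (a, b) \in E -> 0 < #|Items|.
Proof. by case/items_edge => it Hit _; apply/card_gt0P; exists it. Qed.

Lemma ninitial_n : (ninitial E == n) = (E == set0).
Proof.
apply/eqP/eqP => [H|H].
  have HT : [set v | initial E v] = setT.
    by apply/eqP; rewrite eqEcard subsetT cardsT card_ord; move: H; rewrite /ninitial => ->; rewrite leqnn.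
  apply/setP => [[a b]]; rewrite inE; apply/negP => Hab.
  have : b \in [set v | initial E v] by rewrite HT inE.
  by rewrite inE => /initialP /(_ a); rewrite Hab.
rewrite /ninitial -[RHS]card_ord -cardsT; apply: eq_card => v.
by rewrite !inE; apply/initialP => u; rewrite H inE.
Qed.
Lemma nterminal_n : (nterminal E == n) = (E == set0).
Proof.
apply/eqP/eqP => [H|H].
  have HT : [set v | terminal E v] = setT.
    by apply/eqP; rewrite eqEcard subsetT cardsT card_ord; move: H; rewrite /nterminal => ->; rewrite leqnn.
  apply/setP => [[a b]]; rewrite inE; apply/negP => Hab.
  have : a \in [set v | terminal E v] by rewrite HT inE.
  by rewrite inE => /terminalP /(_ b); rewrite Hab.
rewrite /nterminal -[RHS]card_ord -cardsT; apply: eq_card => v.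
by rewrite !inE; apply/terminalP => u; rewrite H inE.
Qed.

Lemma term_all_but a : (forall z, z != a -> terminal E z) -> n.-1 <= nterminal E.
Proof.
move=> H; have := cardsC1 a; rewrite card_ord => <-; rewrite /nterminal; apply: subset_leq_card.
by apply/subsetP => z; rewrite !inE => /H.
Qed.
Lemma init_all_but a : (forall z, z != a -> initial E z) -> n.-1 <= ninitial E.
Proof.
move=> H; have := cardsC1 a; rewrite card_ord => <-; rewrite /ninitial; apply: subset_leq_card.
by apply/subsetP => z; rewrite !inE => /H.
Qed.

Lemma K1_bound : #|Items| <= 1 -> n.-1 <= nterminal E \/ n.-1 <= ninitial E.
Proof.
move=> /card_le1_eqP Heq.
case: (set_0Vmem E) => [HE|[[a0 b0] H0]].
  by right; move/eqP: HE; rewrite -ninitial_n => /eqP ->; lia.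
case: (items_edge H0) => it Hit Hc.
have key z b : (z, b) \in E -> [\/ it = Dout z, it = Din b | it = Ed (z, b)].
  case/items_edge => it' Hit' Hc'; by rewrite -(Heq _ _ Hit Hit').
case: Hc => Hit0; rewrite Hit0 in key.
- left; apply: (term_all_but (a := a0)) => z Hz; apply/terminalP => w; apply/negP => Hw.
  by case: (key _ _ Hw) => // [[Hza]]; rewrite Hza eqxx in Hz.
- right; apply: (init_all_but (a := b0)) => z Hz; apply/initialP => w; apply/negP => Hw.
  by case: (key _ _ Hw) => // [[Hza]]; rewrite Hza eqxx in Hz.
- left; apply: (term_all_but (a := a0)) => z Hz; apply/terminalP => w; apply/negP => Hw.
  by case: (key _ _ Hw) => // [[Hza _]]; rewrite Hza eqxx in Hz.
Qed.

Lemma le1_all_but (A : {set 'I_n}) : n.-1 <= #|A| ->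
  forall z z', z \notin A -> z' \notin A -> z = z'.
Proof.
move=> H; have H2 := cardsC A; rewrite card_ord in H2.
have /card_le1_eqP Hc : #|~: A| <= 1 by lia.
by move=> z z' Hz Hz'; apply: Hc; rewrite inE.
Qed.

Lemma F4_term : n.-1 <= nterminal E -> #|Items| <= 1.
Proof.
move=> /le1_all_but Hu.
have Hnt z w : (z, w) \in E -> z \notin [set v | terminal E v].
  by move=> Hz; rewrite inE; apply/nterminalP; exists w.
have Hc it : it \in Items -> (exists2 z, it = Dout z & 1 < outdeg z) \/
    (exists a b, [/\ it = Ed (a, b), (a, b) \in E & outdeg a = 1]).
  rewrite inE; case: it => [[a|b]|[a b]] /= H.
  - by left; exists a.
  - have [d [Hd Hdb]] := in_other b H; have [d' [Hd' Hdb']] := in_other d H.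
    by rewrite (Hu _ _ (Hnt _ _ Hd) (Hnt _ _ Hd')) eqxx in Hdb'.
  - case/and3P: H => H1 /eqP H2 _; right; by exists a, b.
apply/card_le1_eqP => it1 it2 /Hc H1 /Hc H2.
case: H1 => [[z -> Hz]|[a [b [-> Hab Ha]]]]; case: H2 => [[z' -> Hz']|[a' [b' [-> Hab' Ha']]]].
- have [c [Hc1 _]] := out_other z Hz; have [c' [Hc2 _]] := out_other z' Hz'.
  by rewrite (Hu _ _ (Hnt _ _ Hc1) (Hnt _ _ Hc2)).
- have [c [Hc1 _]] := out_other z Hz.
  by rewrite (Hu _ _ (Hnt _ _ Hc1) (Hnt _ _ Hab')) Ha' in Hz.
- have [c [Hc1 _]] := out_other z' Hz'.
  by rewrite (Hu _ _ (Hnt _ _ Hc1) (Hnt _ _ Hab)) Ha in Hz'.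
- have E1 := Hu _ _ (Hnt _ _ Hab) (Hnt _ _ Hab'); subst a'.
  by rewrite (out1_uniq Ha Hab Hab').
Qed.

Lemma F4_init : n.-1 <= ninitial E -> #|Items| <= 1.
Proof.
move=> /le1_all_but Hu.
have Hnt z w : (w, z) \in E -> z \notin [set v | initial E v].
  by move=> Hz; rewrite inE; apply/ninitialP; exists w.
have Hc it : it \in Items -> (exists2 z, it = Din z & 1 < indeg z) \/
    (exists a b, [/\ it = Ed (a, b), (a, b) \in E & indeg b = 1]).
  rewrite inE; case: it => [[a|b]|[a b]] /= H.
  - have [d [Hd Hdb]] := out_other a H; have [d' [Hd' Hdb']] := out_other d H.
    by rewrite (Hu _ _ (Hnt _ _ Hd) (Hnt _ _ Hd')) eqxx in Hdb'.
  - by left; exists b.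
  - case/and3P: H => H1 _ /eqP H2; right; by exists a, b.
apply/card_le1_eqP => it1 it2 /Hc H1 /Hc H2.
case: H1 => [[z -> Hz]|[a [b [-> Hab Ha]]]]; case: H2 => [[z' -> Hz']|[a' [b' [-> Hab' Ha']]]].
- have [c [Hc1 _]] := in_other z Hz; have [c' [Hc2 _]] := in_other z' Hz'.
  by rewrite (Hu _ _ (Hnt _ _ Hc1) (Hnt _ _ Hc2)).
- have [c [Hc1 _]] := in_other z Hz.
  by rewrite (Hu _ _ (Hnt _ _ Hc1) (Hnt _ _ Hab')) Ha' in Hz.
- have [c [Hc1 _]] := in_other z' Hz'.
  by rewrite (Hu _ _ (Hnt _ _ Hc1) (Hnt _ _ Hab)) Ha in Hz'.
- have E1 := Hu _ _ (Hnt _ _ Hab) (Hnt _ _ Hab'); subst b'.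
  by rewrite (in1_uniq Ha Hab Hab').
Qed.

End G.


Lemma acyclic_sub n (E E' : {set 'I_n * 'I_n}) : E' \subset E -> acyclic E -> acyclic E'.
Proof.
move=> Hs Hac u v Huv; apply/negP => Hc.
have Huv' : (u, v) \in E by apply: (subsetP Hs).
move: (Hac _ _ Huv'); rewrite (connect_sub _ Hc) //.
move=> a b Hab; apply: connect1; exact: (subsetP Hs).
Qed.

Lemma minimal_minprop n (E : {set 'I_n * 'I_n}) x y : minimal_tdg x y E -> minprop E.
Proof.
move=> [[Hac [Hx Hy]] Hmin] a b Hab.
case Ha: (outdeg E a == 1); first by left; apply/eqP.
case Hb: (indeg E b == 1); first by right; apply/eqP.
exfalso; apply: (Hmin (a, b) Hab).
have Ha2 : 1 < outdeg E a by have := out_pos Hab; move/negbT: Ha; lia.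
have Hb2 : 1 < indeg E b by have := in_pos Hab; move/negbT: Hb; lia.
split; first by apply: acyclic_sub Hac; apply: subD1set.
split.
  rewrite -Hx /ninitial; apply: eq_card => v; rewrite !inE.
  apply/initialP/initialP => H u.
    apply/negP => Huv; case: (eqVneq (u, v) (a, b)) => [[Hu Hv]|Hne]; first subst u v.
      have [c [Hc Hca]] := in_other a Hb2.
      by move: (H c); rewrite !inE Hc andbT xpair_eqE (negbTE Hca).
    by move: (H u); rewrite !inE Hne Huv.
  by rewrite !inE negb_and H orbT.
rewrite -Hy /nterminal; apply: eq_card => v; rewrite !inE.
apply/terminalP/terminalP => H u.
  apply/negP => Huv; case: (eqVneq (v, u) (a, b)) => [[Hu Hv]|Hne]; first subst u v.
    have [c [Hc Hca]] := out_other b Ha2.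
    by move: (H c); rewrite !inE Hc andbT xpair_eqE (negbTE Hca) andbF.
  by move: (H u); rewrite !inE Hne Huv.
by rewrite !inE negb_and H orbT.
Qed.

Lemma minprop_minimal n (E : {set 'I_n * 'I_n}) x y :
  tdg x y E -> minprop E -> minimal_tdg x y E.
Proof.
move=> [Hac [Hx Hy]] Hm; split; first by split.
move=> [a b] Hab [_ [Hx' Hy']].
case: (Hm _ _ Hab) => H1.
- have Hp : [set v | terminal E v] \proper [set v | terminal (E :\ (a, b)) v].
    rewrite properE; apply/andP; split.
      apply/subsetP => v; rewrite !inE => /terminalP Hv; apply/terminalP => w.
      by rewrite !inE negb_and Hv orbT.
    apply/subsetPn; exists a; rewrite !inE; last by apply/nterminalP; exists b.
    apply/terminalP => w; rewrite !inE negb_and negbK.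
    case: (boolP ((a, w) \in E)) => Hw; last by rewrite orbT.
    by rewrite (out1_uniq H1 Hab Hw) eqxx.
  by move: (proper_card Hp); rewrite -/(nterminal E) -/(nterminal (E :\ (a, b))) Hy Hy' ltnn.
- have Hp : [set v | initial E v] \proper [set v | initial (E :\ (a, b)) v].
    rewrite properE; apply/andP; split.
      apply/subsetP => v; rewrite !inE => /initialP Hv; apply/initialP => w.
      by rewrite !inE negb_and Hv orbT.
    apply/subsetPn; exists b; rewrite !inE; last by apply/ninitialP; exists a.
    apply/initialP => w; rewrite !inE negb_and negbK.
    case: (boolP ((w, b) \in E)) => Hw; last by rewrite orbT.
    by rewrite (in1_uniq H1 Hab Hw) eqxx.
  by move: (proper_card Hp); rewrite -/(ninitial E) -/(ninitial (E :\ (a, b))) Hx Hx' ltnn.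
Qed.


Section C.
Variable n : nat.
Variable E : {set 'I_n * 'I_n}.

Lemma adj_sym : symmetric (adj E).
Proof. by move=> a b; rewrite /adj orbC. Qed.

Lemma connect_adj_sym a b : connect (adj E) a b = connect (adj E) b a.
Proof. exact: (sym_connect_sym adj_sym). Qed.

Lemma mem_comp a : a \in Defs.comp E a.
Proof. by rewrite inE connect0. Qed.

Lemma comp_eq a b : connect (adj E) a b -> Defs.comp E a = Defs.comp E b.
Proof.
move=> H; apply/setP => z; rewrite !inE; apply/idP/idP => Hz.
  by apply: connect_trans Hz; rewrite connect_adj_sym.
exact: connect_trans H Hz.
Qed.

Lemma closed_sub (S : {set 'I_n}) :
  (forall a b, a \in S -> adj E a b -> b \in S) ->
  forall a b, a \in S -> connect (adj E) a b -> b \in S.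
Proof.
move=> HS a b Ha Hc.
have Hcl : closed (adj E) (mem S).
  move=> u v Huv; apply/idP/idP => [Hu|Hv]; first exact: HS Huv.
  by apply: HS Hv _; rewrite adj_sym.
by rewrite -(closed_connect Hcl Hc).
Qed.

Lemma adj_edge a b : (a, b) \in E -> adj E a b.
Proof. by rewrite /adj => ->. Qed.
Lemma adj_edge' a b : (a, b) \in E -> adj E b a.
Proof. by rewrite /adj => ->; rewrite orbT. Qed.

Lemma isolatedPn v : reflect (exists w, adj E v w) (~~ isolated E v).
Proof.
apply: (iffP forallPn) => [[w]|[w Hw]]; rewrite ?negbK; first by exists w.
by exists w; rewrite negbK.
Qed.

Lemma noniso_adj a b : adj E a b -> ~~ isolated E a.
Proof. by move=> H; apply/isolatedPn; exists b. Qed.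

Lemma interior_noniso v : interior E v -> ~~ isolated E v.
Proof.
by case/andP => /ninitialP [u Hu] _; apply: (@noniso_adj v u); rewrite adj_edge'.
Qed.

Lemma in_nontriv v : ~~ isolated E v -> Defs.comp E v \in nontriv_comps E.
Proof. by move=> H; apply/imsetP; exists v; rewrite ?inE. Qed.

Lemma nontrivP C : C \in nontriv_comps E -> exists2 v, ~~ isolated E v & C = Defs.comp E v.
Proof. by case/imsetP => v; rewrite inE => Hv ->; exists v. Qed.

Lemma single_comp C z : nontriv_comps E = [set C] -> ~~ isolated E z -> Defs.comp E z = C.
Proof. by move=> H Hz; move: (in_nontriv Hz); rewrite H inE => /eqP. Qed.

Lemma single_mem C z : nontriv_comps E = [set C] -> ~~ isolated E z -> z \in C.
Proof. by move=> H Hz; rewrite -(single_comp H Hz) mem_comp. Qed.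

Lemma sep C z w (S : {set 'I_n}) : nontriv_comps E = [set C] -> ~~ isolated E z ->
  (forall a b, a \in S -> adj E a b -> b \in S) -> z \in S -> w \in C -> w \notin S -> False.
Proof.
move=> H Hz HS HzS HwC; rewrite -(single_comp H Hz) inE in HwC.
by rewrite (closed_sub HS HzS HwC).
Qed.

Definition acomp it := Defs.comp E (anchor it).

Lemma nontriv_le_items : #|nontriv_comps E| <= #|Items E|.
Proof.
apply: leq_trans (leq_imset_card acomp (Items E)).
apply: subset_leq_card; apply/subsetP => C /nontrivP [v /isolatedPn [w Hw] ->].
apply/imsetP.
have [a [b [Hab Hc]]] : exists a b, (a, b) \in E /\ connect (adj E) v a /\ connect (adj E) v b.
  case/orP: Hw => H.
    exists v, w; split => //; split; first exact: connect0.
    by apply: connect1; rewrite adj_edge.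
  exists w, v; split => //; split; last exact: connect0.
  by apply: connect1; rewrite adj_edge'.
case: Hc => Ha Hb.
case: (items_edge Hab) => it Hit Hc; exists it => //; rewrite /acomp.
by case: Hc => ->; apply: comp_eq.
Qed.

Lemma acomp_in it : it \in Items E -> acomp it \in nontriv_comps E.
Proof.
rewrite inE /acomp; case: it => [[a|b]|[a b]] /= H; apply: in_nontriv.
- by have [c [Hc _]] := out_other a H; apply: noniso_adj (adj_edge Hc).
- by have [c [Hc _]] := in_other b H; apply: noniso_adj (adj_edge' Hc).
- by case/and3P: H => H _ _; apply: noniso_adj (adj_edge H).
Qed.

Definition up w it := it = Din w \/ exists2 p, (p, w) \in E & (it = Ed (p, w) \/ it = Dout p).
Definition down w it := it = Dout w \/ exists2 q, (w, q) \in E & (it = Ed (w, q) \/ it = Din q).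

Lemma updown_exist w : interior E w ->
  (exists2 it, it \in Items E & up w it) /\ (exists2 it, it \in Items E & down w it).
Proof.
case/andP => /ninitialP [p Hp] /nterminalP [q Hq]; split.
- case: (ltnP 1 (indeg E w)) => H1.
    by exists (Din w); [rewrite inE | left].
  case: (ltnP 1 (outdeg E p)) => H2.
    by exists (Dout p); [rewrite inE | right; exists p => //; right].
  exists (Ed (p, w)); last by right; exists p => //; left.
  have := out_pos Hp; have := in_pos Hp.
  rewrite inE /= Hp /=; move=> h1 h2; apply/andP; split; apply/eqP; lia.
- case: (ltnP 1 (outdeg E w)) => H1.
    by exists (Dout w); [rewrite inE | left].
  case: (ltnP 1 (indeg E q)) => H2.
    by exists (Din q); [rewrite inE | right; exists q => //; right].
  exists (Ed (w, q)); last by right; exists q => //; left.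
  have := out_pos Hq; have := in_pos Hq.
  rewrite inE /= Hq /=; move=> h1 h2; apply/andP; split; apply/eqP; lia.
Qed.

Lemma up_down_edge w w' it : up w it -> down w' it -> (w', w) \in E.
Proof.
case=> [H1|[p Hp [H1|H1]]]; case=> [H2|[q Hq [H2|H2]]]; rewrite H1 in H2;
  rewrite /Din /Dout /Ed in H2; try discriminate.
all: by case: H2 => *; subst.
Qed.

Lemma up_anchor w it : up w it -> connect (adj E) w (anchor it).
Proof.
case=> [->|[p Hp [->|->]]] /=; first exact: connect0.
all: by apply: connect1; rewrite adj_edge'.
Qed.
Lemma down_anchor w it : down w it -> connect (adj E) w (anchor it).
Proof.
case=> [->|[q Hq [->|->]]] /=; try exact: connect0.
by apply: connect1; rewrite adj_edge.
Qed.

Lemma up_up w w' it : up w it -> up w' it -> w != w' ->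
  exists p, [/\ it = Dout p, (p, w) \in E & (p, w') \in E].
Proof.
case=> [H1|[p Hp [H1|H1]]]; case=> [H2|[q Hq [H2|H2]]]; rewrite H1 in H2;
  rewrite /Din /Dout /Ed in H2; try discriminate.
- by case: H2 => ->; rewrite eqxx.
- by case: H2 => _ ->; rewrite eqxx.
- by case: H2 => Hpq; subst q; exists p.
Qed.
Lemma down_down w w' it : down w it -> down w' it -> w != w' ->
  exists q, [/\ it = Din q, (w, q) \in E & (w', q) \in E].
Proof.
case=> [H1|[p Hp [H1|H1]]]; case=> [H2|[q Hq [H2|H2]]]; rewrite H1 in H2;
  rewrite /Din /Dout /Ed in H2; try discriminate.
- by case: H2 => ->; rewrite eqxx.
- by case: H2 => -> _; rewrite eqxx.
- by case: H2 => Hpq; subst q; exists p.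
Qed.

End C.


Section S.
Variable n : nat.
Variable E : {set 'I_n * 'I_n}.
Variable Hac : acyclic E.
Variable Hm : minprop E.

Section NoInt.
Variable Hni : forall v, ~~ interior E v.

Lemma nonint u v w : (u, v) \in E -> (v, w) \in E -> False.
Proof. by move=> H1 H2; move: (Hni v); rewrite (interior_of H1 H2). Qed.

Lemma noint_inj : {in Items E &, injective (acomp E)}.
Proof.
move=> it1 it2 H1 H2 Hc.
have Hcon : connect (adj E) (anchor it1) (anchor it2).
  by move: (mem_comp E (anchor it2)); rewrite /acomp in Hc; rewrite -Hc inE.
move: H1 H2 Hcon; clear Hc; rewrite !inE.
case: it1 => [[a|b]|[a b]] /= H1 H2 Hcon.
-
  have [c0 [Hc0 _]] := out_other a H1.
  pose S := a |: [set b | (a, b) \in E].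
  have HS : forall c d, c \in S -> adj E c d -> d \in S.
    move=> c d; rewrite !inE => /orP [/eqP ->|Hac'] /orP [] Hcd.
    + by rewrite Hcd orbT.
    + by case: (nonint Hcd Hc0).
    + by case: (nonint Hac' Hcd).
    + case: (Hm Hac') => H; first by rewrite H in H1.
      by rewrite (in1_uniq H Hcd Hac') eqxx.
  have HA := closed_sub HS (setU11 _ _) Hcon.
  move: HA H2; clear Hcon; rewrite !inE.
  case: it2 => [[a'|b']|[a' b']] /= /orP [/eqP E1|E1] H2.
  + by rewrite E1.
  + have [c [Hc _]] := out_other a' H2; by case: (nonint E1 Hc).
  + subst b'; have [c [Hc _]] := in_other a H2; by case: (nonint Hc Hc0).
  + case: (Hm E1) => H; first by rewrite H in H1.
    by rewrite H in H2.
  + case/and3P: H2 => H2 /eqP H3 _; subst a'; by rewrite H3 in H1.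
  + case/and3P: H2 => H2 _ _; by case: (nonint E1 H2).
-
  have [c0 [Hc0 _]] := in_other b H1.
  pose S := b |: [set a | (a, b) \in E].
  have HS : forall c d, c \in S -> adj E c d -> d \in S.
    move=> c d; rewrite !inE => /orP [/eqP ->|Hcb] /orP [] Hcd.
    + by case: (nonint Hc0 Hcd).
    + by rewrite Hcd orbT.
    + case: (Hm Hcb) => H; last by rewrite H in H1.
      by rewrite (out1_uniq H Hcd Hcb) eqxx.
    + by case: (nonint Hcd Hcb).
  have HA := closed_sub HS (setU11 _ _) Hcon.
  move: HA H2; clear Hcon; rewrite !inE.
  case: it2 => [[a'|b']|[a' b']] /= /orP [/eqP E1|E1] H2.
  + subst a'; have [c [Hc _]] := out_other b H2; by case: (nonint Hc0 Hc).
  + case: (Hm E1) => H; first by rewrite H in H2.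
    by rewrite H in H1.
  + by rewrite E1.
  + have [c [Hc _]] := in_other b' H2; by case: (nonint Hc E1).
  + case/and3P: H2 => H2 _ _; subst a'; by case: (nonint Hc0 H2).
  + case/and3P: H2 => H2 /eqP H3 /eqP H4.
    have E2 := out1_uniq H3 E1 H2; subst b'.
    by rewrite H4 in H1.
-
  case/and3P: H1 => Hab /eqP Ha /eqP Hb.
  pose S := [set a; b].
  have HS : forall c d, c \in S -> adj E c d -> d \in S.
    move=> c d; rewrite !inE => /orP [] /eqP -> /orP [] Hcd.
    + by rewrite (out1_uniq Ha Hab Hcd) eqxx orbT.
    + by case: (nonint Hcd Hab).
    + by case: (nonint Hab Hcd).
    + by rewrite (in1_uniq Hb Hab Hcd) eqxx.
  have HA := closed_sub HS (set21 _ _) Hcon.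
  move: HA H2; clear Hcon; rewrite !inE.
  case: it2 => [[a'|b']|[a' b']] /= /orP [] /eqP E1 H2; subst.
  + by rewrite Ha in H2.
  + have [c [Hc _]] := out_other b H2; by case: (nonint Hab Hc).
  + have [c [Hc _]] := in_other a H2; by case: (nonint Hc Hab).
  + by rewrite Hb in H2.
  + case/and3P: H2 => H2 _ _; by rewrite (out1_uniq Ha Hab H2).
  + case/and3P: H2 => H2 _ _; by case: (nonint Hab H2).
Qed.

Lemma noint_card : #|Items E| <= #|nontriv_comps E|.
Proof.
rewrite -(card_in_imset noint_inj); apply: subset_leq_card.
by apply/subsetP => C /imsetP [it Hit ->]; apply: acomp_in.
Qed.

End NoInt.


Lemma card3 (T : finType) (A : {set T}) a b c :
  a \in A -> b \in A -> c \in A -> a != b -> a != c -> b != c -> 2 < #|A|.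
Proof.
move=> Ha Hb Hc Hab Hac1 Hbc.
have H : a |: [set b; c] \subset A.
  by apply/subsetP => z; rewrite !inE => /or3P [] /eqP ->.
apply: leq_trans (subset_leq_card H).
by rewrite (cardsU1 a) !inE negb_or Hab Hac1 cards2 Hbc.
Qed.

Lemma two_distinct (T : finType) (A : {set T}) :
  1 < #|A| -> exists a b, [/\ a \in A, b \in A & a != b].
Proof.
move=> H; have /card_gt0P [a Ha] : 0 < #|A| by lia.
case: (boolP (A \subset [set a])) => Hs.
  by move: (subset_leq_card Hs); rewrite cards1; lia.
case/subsetPn: Hs => b Hb; rewrite inE => Hba; exists a, b; split => //.
by rewrite eq_sym.
Qed.

Lemma two_classes (T : finType) (A : {set T}) (P Q : T -> Prop) :
  (forall a, a \in A -> P a \/ Q a) ->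
  (forall a b, a \in A -> b \in A -> P a -> P b -> a = b) ->
  (forall a b, a \in A -> b \in A -> Q a -> Q b -> a = b) -> #|A| <= 2.
Proof.
move=> Hc HP HQ.
case: (set_0Vmem A) => [->|[a Ha]]; first by rewrite cards0.
have Hsub : A \subset a |: (A :\ a) by apply/subsetP => z Hz; rewrite !inE Hz andbT; case: eqP.
apply: leq_trans (subset_leq_card Hsub) _; rewrite cardsU1.
suff : #|A :\ a| <= 1 by case: (a \notin _); lia.
apply/card_le1_eqP => u v; rewrite !inE => /andP [Hua Hu] /andP [Hva Hv].
case: (Hc _ Ha) => Hpa.
- have Qu : Q u by case: (Hc _ Hu) => // Pu; rewrite (HP _ _ Hu Ha Pu Hpa) eqxx in Hua.
  have Qv : Q v by case: (Hc _ Hv) => // Pv; rewrite (HP _ _ Hv Ha Pv Hpa) eqxx in Hva.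
  exact: HQ.
- have Pu : P u by case: (Hc _ Hu) => // Qu; rewrite (HQ _ _ Hu Ha Qu Hpa) eqxx in Hua.
  have Pv : P v by case: (Hc _ Hv) => // Qv; rewrite (HQ _ _ Hv Ha Qv Hpa) eqxx in Hva.
  exact: HP.
Qed.

Lemma star_out_closed z : initial E z ->
  (forall b, (z, b) \in E -> terminal E b /\ indeg E b = 1) ->
  forall c d, c \in z |: [set b | (z, b) \in E] -> adj E c d ->
     d \in z |: [set b | (z, b) \in E].
Proof.
move=> /initialP Hz Hb c d; rewrite !inE => /orP [/eqP ->|Hzc] /orP [] Hcd.
- by rewrite Hcd orbT.
- by move: (Hz d); rewrite Hcd.
- by case: (Hb _ Hzc) => /terminalP /(_ d); rewrite Hcd.
- by case: (Hb _ Hzc) => _ H1; rewrite (in1_uniq H1 Hcd Hzc) eqxx.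
Qed.

Lemma star_in_closed z : terminal E z ->
  (forall a, (a, z) \in E -> initial E a /\ outdeg E a = 1) ->
  forall c d, c \in z |: [set a | (a, z) \in E] -> adj E c d ->
     d \in z |: [set a | (a, z) \in E].
Proof.
move=> /terminalP Hz Hb c d; rewrite !inE => /orP [/eqP ->|Hzc] /orP [] Hcd.
- by move: (Hz d); rewrite Hcd.
- by rewrite Hcd orbT.
- by case: (Hb _ Hzc) => _ H1; rewrite (out1_uniq H1 Hcd Hzc) eqxx.
- by case: (Hb _ Hzc) => /initialP /(_ d); rewrite Hcd.
Qed.

Lemma pair_closed a b : (a, b) \in E -> initial E a -> terminal E b ->
  outdeg E a = 1 -> indeg E b = 1 ->
  forall c d, c \in [set a; b] -> adj E c d -> d \in [set a; b].
Proof.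
move=> Hab /initialP Ha /terminalP Hb Ho Hi c d; rewrite !inE => /orP [] /eqP -> /orP [] Hcd.
- by rewrite (out1_uniq Ho Hab Hcd) eqxx orbT.
- by move: (Ha d); rewrite Hcd.
- by move: (Hb d); rewrite Hcd.
- by rewrite (in1_uniq Hi Hab Hcd) eqxx.
Qed.

Lemma not_interior_init z w : ~~ interior E z -> (z, w) \in E -> initial E z.
Proof.
move=> H Hzw; move: H; rewrite /interior negb_and !negbK => /orP [] // /terminalP /(_ w).
by rewrite Hzw.
Qed.
Lemma not_interior_term z w : ~~ interior E z -> (w, z) \in E -> terminal E z.
Proof.
move=> H Hzw; move: H; rewrite /interior negb_and !negbK => /orP [] // /initialP /(_ w).
by rewrite Hzw.
Qed.

Lemma noloopE a : (a, a) \in E = false.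
Proof. by apply/negbTE; apply: noloop. Qed.

End S.


Section K2.
Variable n : nat.
Variable E : {set 'I_n * 'I_n}.
Variable Hac : acyclic E.
Variable Hm : minprop E.

Lemma nontriv_sub : nontriv_comps E \subset acomp E @: Items E.
Proof.
apply/subsetP => C /nontrivP [v /isolatedPn [w Hw] ->].
apply/imsetP.
have [a [b [Hab Hc]]] : exists a b, (a, b) \in E /\ connect (adj E) v a /\ connect (adj E) v b.
  case/orP: Hw => H.
    exists v, w; split => //; split; first exact: connect0.
    by apply: connect1; rewrite adj_edge.
  exists w, v; split => //; split; last exact: connect0.
  by apply: connect1; rewrite adj_edge'.
case: Hc => Ha Hb.
case: (items_edge Hab) => it Hit Hc; exists it => //; rewrite /acomp.
by case: Hc => ->; apply: comp_eq.
Qed.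

Lemma items_two U D it : U \in Items E -> D \in Items E -> U != D ->
  #|Items E| <= 2 -> it \in Items E -> it = U \/ it = D.
Proof.
move=> HU HD HUD HK Hit.
case: (eqVneq it U) => [->|H1]; first by left.
case: (eqVneq it D) => [->|H2]; first by right.
have H1' : U != it by rewrite eq_sym.
have H2' : D != it by rewrite eq_sym.
by move: (card3 HU HD Hit HUD H1' H2'); lia.
Qed.

Lemma up_not_down w it : up E w it -> down E w it -> False.
Proof. by move=> H1 H2; move: (up_down_edge H1 H2); rewrite noloopE. Qed.

Lemma acomp_up w it : up E w it -> acomp E it = Defs.comp E w.
Proof. by move=> H; rewrite /acomp; symmetry; apply: comp_eq; apply: up_anchor. Qed.
Lemma acomp_down w it : down E w it -> acomp E it = Defs.comp E w.
Proof. by move=> H; rewrite /acomp; symmetry; apply: comp_eq; apply: down_anchor. Qed.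

Lemma down_Dout w a : down E w (Dout a) -> a = w.
Proof. by case=> [[]|[q Hq [|]]] //. Qed.
Lemma up_Din w b : up E w (Din b) -> b = w.
Proof. by case=> [[]|[q Hq [|]]] //. Qed.

Variable HK : #|Items E| <= 2.

Lemma K2_two : #|nontriv_comps E| = 2 -> forall v, ~~ interior E v.
Proof.
move=> H2 w; apply/negP => Hw.
have [[U HU HUu] [D HD HDd]] := updown_exist Hw.
have HUD : U != D by apply/eqP => HUD; subst D; exact: up_not_down HUu HDd.
have [C' [HC' HC'w]] : exists C', C' \in nontriv_comps E /\ C' != Defs.comp E w.
  have [C1 [C2 [H1 H2' H12]]] := two_distinct (A := nontriv_comps E) (ltac:(lia)).
  case: (eqVneq C1 (Defs.comp E w)) => [E1|]; last by exists C1.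
  by exists C2; split => //; rewrite -E1 eq_sym.
have /imsetP [it3 Hit3 E3] := subsetP nontriv_sub _ HC'.
have HU3 : U != it3.
  by apply/eqP => E4; subst it3; rewrite E3 (acomp_up HUu) eqxx in HC'w.
have HD3 : D != it3.
  by apply/eqP => E4; subst it3; rewrite E3 (acomp_down HDd) eqxx in HC'w.
by move: (card3 HU HD Hit3 HUD HU3 HD3); lia.
Qed.

Lemma all_interior_updown w U D : up E w U -> down E w D -> U \in Items E -> D \in Items E ->
  forall z, interior E z -> up E z U /\ down E z D.
Proof.
move=> HUw HDw HU HD z Hz.
have HUD : U != D by apply/eqP => HUD; subst D; exact: up_not_down HUw HDw.
have [[U' HU' HUz] [D' HD' HDz]] := updown_exist Hz.
have HUD' : U' != D' by apply/eqP => HUD'; subst D'; exact: up_not_down HUz HDz.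
case: (items_two HU HD HUD HK HU') => E1; case: (items_two HU HD HUD HK HD') => E2; subst.
- by rewrite eqxx in HUD'.
- by split.
- exfalso; have e1 := up_down_edge HUz HDw; have e2 := up_down_edge HUw HDz.
  exact: (no2cycle Hac e1 e2).
- by rewrite eqxx in HUD'.
Qed.

Lemma up_Dout z u : up E z (Dout u) -> (u, z) \in E.
Proof.
case=> [|[p Hp [|]]] //; rewrite /Dout /Din /Ed //.
by case=> ->.
Qed.
Lemma down_Din z v : down E z (Din v) -> (z, v) \in E.
Proof.
case=> [|[q Hq [|]]] //; rewrite /Dout /Din /Ed //.
by case=> ->.
Qed.

Lemma K2_single C : nontriv_comps E = [set C] ->
          (forall w, w \in C -> ~~ interior E w)
          \/
          (exists u v : 'I_n,
             u \in C /\ v \in C /\ initial E u /\ terminal E v /\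
             2 <= #|[set w in C | interior E w]| /\
             (forall w, w \in C -> interior E w -> adj E u w && adj E v w))
          \/
          (exists w : 'I_n,
             let P := [set a | (a, w) \in E] in
             let Q := [set b | (w, b) \in E] in
             [set w' in C | interior E w'] = [set w] /\
             P \subset [set a | initial E a] /\
             Q \subset [set b | terminal E b] /\
             0 < #|P| /\ 0 < #|Q| /\
             (1 < #|P| -> forall a b, a \in P -> adj E a b -> b = w) /\
             (1 < #|Q| -> forall a b, a \in Q -> adj E a b -> b = w)).
Proof.
move=> HC.
case: (boolP [exists w in C, interior E w]) => Hex; last first.
  left => w HwC; apply/negP => Hw; move/negP: Hex; apply; apply/existsP; exists w.
  by rewrite HwC.
right; case/exists_inP: Hex => w HwC Hw.
have [[U HU HUu] [D HD HDd]] := updown_exist Hw.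
have HUD : U != D by apply/eqP => HUD; subst D; exact: up_not_down HUu HDd.
have Hall := all_interior_updown HUu HDd HU HD.
have HintC z : interior E z -> z \in C.
  by move=> Hz; apply: (single_mem HC); apply: interior_noniso.
case: (boolP [exists w' in C, interior E w' && (w' != w)]) => Hex.
-
  left; case/exists_inP: Hex => w' Hw'C /andP [Hw' Hw'w].
  have [u [EU Huw Huw']] := up_up (proj1 (Hall _ Hw)) (proj1 (Hall _ Hw')) (ltac:(by rewrite eq_sym)).
  have [v [ED Hwv Hw'v]] := down_down (proj2 (Hall _ Hw)) (proj2 (Hall _ Hw')) (ltac:(by rewrite eq_sym)).
  subst U D.
  exists u, v; split; first exact: (single_mem HC (noniso_adj (adj_edge Huw))).
  split; first exact: (single_mem HC (noniso_adj (adj_edge' Hwv))).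
  split.
    case: (boolP (initial E u)) => // /ninitialP [p Hp].
    by move: (up_Dout (proj1 (Hall _ (interior_of Hp Huw)))); rewrite noloopE.
  split.
    case: (boolP (terminal E v)) => // /nterminalP [q Hq].
    by move: (down_Din (proj2 (Hall _ (interior_of Hwv Hq)))); rewrite noloopE.
  split.
    have -> : 2 = #|[set w; w']| by rewrite cards2 eq_sym Hw'w.
    by apply: subset_leq_card; apply/subsetP => z; rewrite !inE => /orP [] /eqP ->;
      rewrite ?HwC ?Hw ?Hw'C ?Hw'.
  move=> z _ Hz; have [H1 H2] := Hall _ Hz.
  by rewrite adj_edge ?(up_Dout H1) // adj_edge' ?(down_Din H2).
-
  right.
  have Honly z : interior E z -> z = w.
    move=> Hz; apply/eqP; apply/negPn/negP => Hne; move/negP: Hex; apply.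
    by apply/exists_inP; exists z; [exact: HintC | rewrite Hz Hne].
  have Pinit a : (a, w) \in E -> initial E a.
    move=> Haw; case: (boolP (initial E a)) => // /ninitialP [p Hp].
    by have Eaw := Honly _ (interior_of Hp Haw); move: Haw; rewrite Eaw noloopE.
  have Qterm b : (w, b) \in E -> terminal E b.
    move=> Hwb; case: (boolP (terminal E b)) => // /nterminalP [q Hq].
    by have Ebw := Honly _ (interior_of Hwb Hq); move: Hwb; rewrite Ebw noloopE.
  exists w => P Q.
  split.
    apply/setP => z; rewrite !inE; apply/andP/eqP => [[_ /Honly] //|->].
    by split.
  split; first by apply/subsetP => a; rewrite !inE; apply: Pinit.
  split; first by apply/subsetP => b; rewrite !inE; apply: Qterm.
  split.
    case/andP: Hw => /ninitialP [p Hp] _; apply/card_gt0P; exists p; by rewrite inE.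
  split.
    case/andP: Hw => _ /nterminalP [q Hq]; apply/card_gt0P; exists q; by rewrite inE.
  split.
    move=> HP a b; rewrite inE => Haw Hab.
    have Hdin : Din w \in Items E by rewrite inE.
    have HDU : Din w = U.
      case: (items_two HU HD HUD HK Hdin) => // HDw; rewrite -HDw in HDd.
      by move: (down_Din HDd); rewrite noloopE.
    have Hab' : (a, b) \in E.
      case/orP: Hab => // Hba; by move/initialP: (Pinit _ Haw) => /(_ b); rewrite Hba.
    apply/eqP; apply/negPn/negP => Hbw.
    have Hdout : Dout a \in Items E by rewrite inE; apply: (out2 Hab' Haw).
    case: (items_two HU HD HUD HK Hdout) => HH.
      by rewrite -HDU in HH.
    by rewrite -HH in HDd; move: Haw; rewrite (down_Dout HDd) noloopE.
  move=> HQ b c; rewrite inE => Hwb Hbc.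
  have Hdout : Dout w \in Items E by rewrite inE.
  have HDD : Dout w = D.
    case: (items_two HU HD HUD HK Hdout) => // HDw; rewrite -HDw in HUu.
    by move: (up_Dout HUu); rewrite noloopE.
  have Hcb : (c, b) \in E.
    case/orP: Hbc => // Hbc'; by move/terminalP: (Qterm _ Hwb) => /(_ c); rewrite Hbc'.
  apply/eqP; apply/negPn/negP => Hcw.
  have Hdin : Din b \in Items E by rewrite inE; apply: (in2 Hcb Hwb).
  case: (items_two HU HD HUD HK Hdin) => HH.
    by rewrite -HH in HUu; move: Hwb; rewrite (up_Din HUu) noloopE.
  by rewrite -HDD in HH.
Qed.

End K2.


Section SK.
Variable n : nat.
Variable E : {set 'I_n * 'I_n}.
Variable Hac : acyclic E.
Variable Hm : minprop E.

Lemma nontriv0 : #|nontriv_comps E| = 0 -> E = set0.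
Proof.
move/eqP; rewrite cards_eq0 => /eqP H0; apply/setP => [[a b]]; rewrite inE.
apply/negP => Hab; have := in_nontriv (noniso_adj (adj_edge Hab)).
by rewrite H0 inE.
Qed.

Lemma struct_b C : nontriv_comps E = [set C] ->
  (exists u v : 'I_n,
             u \in C /\ v \in C /\ initial E u /\ terminal E v /\
             2 <= #|[set w in C | interior E w]| /\
             (forall w, w \in C -> interior E w -> adj E u w && adj E v w)) ->
  #|Items E| <= 2.
Proof.
move=> HC [u [v [HuC [HvC [Hu [Hv [H2 Hadj]]]]]]].
have [w1 [w2 [Hw1 Hw2 Hw12]]] := two_distinct (ltac:(exact: H2)).
rewrite !inE in Hw1 Hw2; case/andP: Hw1 => Hw1C Hw1; case/andP: Hw2 => Hw2C Hw2.
have HintC z : interior E z -> z \in C.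
  by move=> Hz; apply: (single_mem HC); apply: interior_noniso.
have Huz z : interior E z -> (u, z) \in E.
  move=> Hz; case/andP: (Hadj _ (HintC _ Hz) Hz) => /orP [] // Hzu _.
  by move/initialP: Hu => /(_ z); rewrite Hzu.
have Hzv z : interior E z -> (z, v) \in E.
  move=> Hz; case/andP: (Hadj _ (HintC _ Hz) Hz) => _ /orP [] // Hvz.
  by move/terminalP: Hv => /(_ z); rewrite Hvz.
have Hou : 1 < outdeg E u := out2 (Huz _ Hw1) (Huz _ Hw2) Hw12.
have Hiv : 1 < indeg E v := in2 (Hzv _ Hw1) (Hzv _ Hw2) Hw12.
have Hinz z : interior E z -> indeg E z = 1.
  by move=> Hz; case: (Hm (Huz _ Hz)) => // H; rewrite H in Hou.
have Houtz z : interior E z -> outdeg E z = 1.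
  by move=> Hz; case: (Hm (Hzv _ Hz)) => // H; rewrite H in Hiv.
have Hsub : Items E \subset [set Dout u; Din v].
  apply/subsetP => it; rewrite inE !inE.
  case: it => [[z|z]|[a b]] /= Hit.
  - case: (eqVneq z u) => [->|Hzu]; first by rewrite eqxx ?orbT.
    exfalso.
    have Hzni : ~~ interior E z by apply/negP => Hz; rewrite Houtz in Hit.
    have [c0 [Hc0 _]] := out_other z Hit.
    have Hzi := not_interior_init Hzni Hc0.
    have Hb b : (z, b) \in E -> terminal E b /\ indeg E b = 1.
      move=> Hzb; have Hib : indeg E b = 1.
        by case: (Hm Hzb) => // H; rewrite H in Hit.
      split => //; apply: (not_interior_term _ Hzb); apply/negP => Hb.
      by move: Hzu; rewrite (in1_uniq Hib Hzb (Huz _ Hb)) eqxx.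
    apply: (sep HC (noniso_adj (adj_edge Hc0)) (star_out_closed Hzi Hb) (setU11 _ _) HuC).
    rewrite !inE negb_or eq_sym Hzu /=.
    by apply/negP => Hzu'; move/initialP: Hu => /(_ z); rewrite Hzu'.
  - case: (eqVneq z v) => [->|Hzv']; first by rewrite eqxx ?orbT.
    exfalso.
    have Hzni : ~~ interior E z by apply/negP => Hz; rewrite Hinz in Hit.
    have [c0 [Hc0 _]] := in_other z Hit.
    have Hzt := not_interior_term Hzni Hc0.
    have Ha a : (a, z) \in E -> initial E a /\ outdeg E a = 1.
      move=> Haz; have Hoa : outdeg E a = 1.
        by case: (Hm Haz) => // H; rewrite H in Hit.
      split => //; apply: (not_interior_init _ Haz); apply/negP => Ha.
      by move: Hzv'; rewrite (out1_uniq Hoa Haz (Hzv _ Ha)) eqxx.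
    apply: (sep HC (noniso_adj (adj_edge' Hc0)) (star_in_closed Hzt Ha) (setU11 _ _) HvC).
    rewrite !inE negb_or eq_sym Hzv' /=.
    by apply/negP => Hzv''; move/terminalP: Hv => /(_ z); rewrite Hzv''.
  - exfalso; case/and3P: Hit => Hab /eqP Hoa /eqP Hib.
    have Hani : ~~ interior E a.
      apply/negP => Ha; have Ebv := out1_uniq Hoa Hab (Hzv _ Ha); subst b.
      by rewrite Hib in Hiv.
    have Hbni : ~~ interior E b.
      apply/negP => Hb; have Eau := in1_uniq Hib Hab (Huz _ Hb); subst a.
      by rewrite Hoa in Hou.
    have Hai := not_interior_init Hani Hab.
    have Hbt := not_interior_term Hbni Hab.
    apply: (sep HC (noniso_adj (adj_edge Hab)) (pair_closed Hab Hai Hbt Hoa Hib) (set21 _ _) HuC).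
    rewrite !inE negb_or; apply/andP; split.
      by apply/negP => /eqP Eua; subst a; rewrite Hoa in Hou.
    by apply/negP => /eqP Eub; subst b; move/initialP: Hu => /(_ a); rewrite Hab.
apply: leq_trans (subset_leq_card Hsub) _.
by rewrite cards2; case: (_ != _).
Qed.


Lemma struct_c C : nontriv_comps E = [set C] ->
  (exists w : 'I_n,
             let P := [set a | (a, w) \in E] in
             let Q := [set b | (w, b) \in E] in
             [set w' in C | interior E w'] = [set w] /\
             P \subset [set a | initial E a] /\
             Q \subset [set b | terminal E b] /\
             0 < #|P| /\ 0 < #|Q| /\
             (1 < #|P| -> forall a b, a \in P -> adj E a b -> b = w) /\
             (1 < #|Q| -> forall a b, a \in Q -> adj E a b -> b = w)) ->
  #|Items E| <= 2.
Proof.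
move=> HC [w H]; cbv zeta in H.
case: H => [HIC [_ [_ [_ [_ [HP1 HQ1]]]]]].
have HintC z : interior E z -> z \in C.
  by move=> Hz; apply: (single_mem HC); apply: interior_noniso.
have Honly z : interior E z -> z = w.
  by move=> Hz; apply/eqP; rewrite -in_set1 -HIC inE HintC.
have : w \in [set w' in C | interior E w'] by rewrite HIC inE.
rewrite inE => /andP [HwC Hw].
have Hpo p : 1 < indeg E w -> (p, w) \in E -> outdeg E p <= 1.
  move=> H1 Hp; rewrite leqNgt; apply/negP => H2.
  have [c [Hc Hcw]] := out_other w H2.
  by move: Hcw; rewrite (HP1 H1 p c) ?inE ?eqxx // adj_edge.
have Hqi q : 1 < outdeg E w -> (w, q) \in E -> indeg E q <= 1.
  move=> H1 Hq; rewrite leqNgt; apply/negP => H2.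
  have [c [Hc Hcw]] := in_other w H2.
  by move: Hcw; rewrite (HQ1 H1 q c) ?inE ?eqxx // adj_edge'.
apply: (@two_classes _ (Items E) (up E w) (down E w)).
- move=> it; rewrite inE; case: it => [[z|z]|[a b]] /= Hit.
  + case: (eqVneq z w) => [->|Hzw]; first by right; left.
    case Hzw' : ((z, w) \in E); first by left; right; exists z => //; right.
    exfalso.
    have Hzni : ~~ interior E z by apply/negP => /Honly; apply/eqP.
    have [c0 [Hc0 _]] := out_other z Hit.
    have Hzi := not_interior_init Hzni Hc0.
    have Hb b : (z, b) \in E -> terminal E b /\ indeg E b = 1.
      move=> Hzb; have Hib : indeg E b = 1.
        by case: (Hm Hzb) => // H; rewrite H in Hit.
      split => //; apply: (not_interior_term _ Hzb); apply/negP => /Honly Hb.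
      by subst b; rewrite Hzb in Hzw'.
    apply: (sep HC (noniso_adj (adj_edge Hc0)) (star_out_closed Hzi Hb) (setU11 _ _) HwC).
    by rewrite !inE negb_or eq_sym Hzw Hzw'.
  + case: (eqVneq z w) => [->|Hzw]; first by left; left.
    case Hzw' : ((w, z) \in E); first by right; right; exists z => //; right.
    exfalso.
    have Hzni : ~~ interior E z by apply/negP => /Honly; apply/eqP.
    have [c0 [Hc0 _]] := in_other z Hit.
    have Hzt := not_interior_term Hzni Hc0.
    have Ha a : (a, z) \in E -> initial E a /\ outdeg E a = 1.
      move=> Haz; have Hoa : outdeg E a = 1.
        by case: (Hm Haz) => // H; rewrite H in Hit.
      split => //; apply: (not_interior_init _ Haz); apply/negP => /Honly Ha.
      by subst a; rewrite Haz in Hzw'.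
    apply: (sep HC (noniso_adj (adj_edge' Hc0)) (star_in_closed Hzt Ha) (setU11 _ _) HwC).
    by rewrite !inE negb_or eq_sym Hzw Hzw'.
  + case/and3P: Hit => Hab /eqP Hoa /eqP Hib.
    case: (eqVneq b w) => [Ebw|Hbw]; first by subst b; left; right; exists a => //; left.
    case: (eqVneq a w) => [Eaw|Haw]; first by subst a; right; right; exists b => //; left.
    exfalso.
    have Hani : ~~ interior E a by apply/negP => /Honly; apply/eqP.
    have Hbni : ~~ interior E b by apply/negP => /Honly; apply/eqP.
    have Hai := not_interior_init Hani Hab.
    have Hbt := not_interior_term Hbni Hab.
    apply: (sep HC (noniso_adj (adj_edge Hab)) (pair_closed Hab Hai Hbt Hoa Hib) (set21 _ _) HwC).
    by rewrite !inE negb_or eq_sym Haw eq_sym Hbw.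
- move=> it1 it2 H1 H2 U1 U2; rewrite !inE in H1 H2; move: U1 U2 H1 H2.
  case=> [E1|[p Hp [E1|E1]]]; case=> [E2|[p' Hp' [E2|E2]]]; subst it1 it2 => //= H1 H2.
  + by case/and3P: H2 => _ _ /eqP H; rewrite H in H1.
  + by move: (Hpo _ H1 Hp'); rewrite leqNgt H2.
  + by case/and3P: H1 => _ _ /eqP H; rewrite H in H2.
  + case/and3P: H1 => _ _ /eqP H; by rewrite (in1_uniq H Hp Hp').
  + case/and3P: (H1) => _ _ /eqP H; rewrite (in1_uniq H Hp Hp') in H1.
    by case/and3P: H1 => _ /eqP H3 _; rewrite H3 in H2.
  + by move: (Hpo _ H2 Hp); rewrite leqNgt H1.
  + case/and3P: (H2) => _ _ /eqP H; rewrite (in1_uniq H Hp' Hp) in H2.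
    by case/and3P: H2 => _ /eqP H3 _; rewrite H3 in H1.
  + case: (eqVneq p p') => [->//|Hpp'].
    by move: (Hpo _ (in2 Hp Hp' Hpp') Hp); rewrite leqNgt H1.
- move=> it1 it2 H1 H2 U1 U2; rewrite !inE in H1 H2; move: U1 U2 H1 H2.
  case=> [E1|[p Hp [E1|E1]]]; case=> [E2|[p' Hp' [E2|E2]]]; subst it1 it2 => //= H1 H2.
  + by case/and3P: H2 => _ /eqP H _; rewrite H in H1.
  + by move: (Hqi _ H1 Hp'); rewrite leqNgt H2.
  + by case/and3P: H1 => _ /eqP H _; rewrite H in H2.
  + case/and3P: H1 => _ /eqP H _; by rewrite (out1_uniq H Hp Hp').
  + case/and3P: (H1) => _ /eqP H _; rewrite (out1_uniq H Hp Hp') in H1.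
    by case/and3P: H1 => _ _ /eqP H3; rewrite H3 in H2.
  + by move: (Hqi _ H2 Hp); rewrite leqNgt H1.
  + case/and3P: (H2) => _ /eqP H _; rewrite (out1_uniq H Hp' Hp) in H2.
    by case/and3P: H2 => _ _ /eqP H3; rewrite H3 in H1.
  + case: (eqVneq p p') => [->//|Hpp'].
    by move: (Hqi _ (out2 Hp Hp' Hpp') Hp); rewrite leqNgt H1.
Qed.

End SK.


Lemma card_ord_pred n (P : pred nat) : #|[set v : 'I_n | P (val v)]| = count P (iota 0 n).
Proof.
rewrite cardsE cardE /enum_mem.
by rewrite -val_enum_ord count_map size_filter enumT.
Qed.
Lemma count_range a b m : count (fun k => (a <= k) && (k < b)) (iota 0 m) = minn b m - minn a m.
Proof.
elim: m => [|m IH]; first by rewrite /= !minn0.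
rewrite -addn1 iotaD count_cat IH /= addn0 add0n.
case: (leqP a m) => Ha; case: (ltnP m b) => Hb /=; lia.
Qed.
Lemma card_range n a b : #|[set v : 'I_n | (a <= nat_of_ord v) && (nat_of_ord v < b)]| = minn b n - minn a n.
Proof. by have := card_ord_pred n (fun k => (a <= k) && (k < b)); rewrite count_range. Qed.

Lemma fwd_closed (T : finType) (e : rel T) (S : pred T) :
  (forall a b, S a -> e a b -> S b) -> forall a b, S a -> connect e a b -> S b.
Proof.
move=> HS a b Ha /connectP [p]; elim: p a Ha => [|c p IH] a Ha /=; first by move=> _ ->.
by case/andP => Hac Hp Hb; apply: (IH c) => //; apply: HS Hac.
Qed.

Section Cons.
Variables (n A B C : nat).
Hypothesis (HA : 1 <= A) (HAB : A < B) (HBC : B <= C) (HC : C < n).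

Definition Estar : {set 'I_n * 'I_n} :=
  [set e | ((nat_of_ord e.1 == 0) && (A <= nat_of_ord e.2 < C)) || ((nat_of_ord e.2 == C) && (1 <= nat_of_ord e.1 < B))].

Lemma Estar_in (a b : 'I_n) : ((a, b) \in Estar) =
  ((nat_of_ord a == 0) && (A <= nat_of_ord b < C)) || ((nat_of_ord b == C) && (1 <= nat_of_ord a < B)).
Proof. by rewrite inE. Qed.

Let o0 : 'I_n := Ordinal (leq_ltn_trans (leq0n C) HC).
Let oA : 'I_n := Ordinal (ltn_trans HAB (leq_ltn_trans HBC HC)).
Let oC : 'I_n := Ordinal HC.

Lemma Estar_term v : terminal Estar v = (B <= nat_of_ord v).
Proof.
case: (ltnP (nat_of_ord v) B) => Hv.
  apply/negbTE/nterminalP; case: (eqVneq (nat_of_ord v) 0) => Hv0.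
    exists oA; rewrite Estar_in Hv0 /= leqnn /=; apply/orP; left; apply/ltP; lia.
  by exists oC; rewrite Estar_in /= eqxx /= Hv andbT lt0n Hv0 orbT.
apply/terminalP => w; rewrite Estar_in; apply/negP => /orP [] /andP [H1 H2].
  by move/eqP: H1; lia.
by move/andP: H2 => [_ H2]; lia.
Qed.

Lemma Estar_init v : initial Estar v = ~~ ((A <= nat_of_ord v) && (nat_of_ord v < C.+1)).
Proof.
case: (boolP ((A <= nat_of_ord v) && (nat_of_ord v < C.+1))) => /andP Hv /=.
  case: Hv => H1 H2; apply/negbTE/ninitialP.
  case: (ltnP (nat_of_ord v) C) => H3.
    by exists o0; rewrite Estar_in /= H1 H3.
  exists oA; rewrite Estar_in /=; apply/orP; right; apply/andP; split; first by apply/eqP; lia.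
  by apply/andP; split; lia.
apply/initialP => w; rewrite Estar_in; apply/negP => /orP [] /andP [H1 H2].
  by case/andP: H2 => H2 H3; apply: Hv; split; lia.
by move/eqP: H1 => H1; apply: Hv; split; lia.
Qed.

Lemma Estar_acyclic : acyclic Estar.
Proof.
move=> a b; rewrite Estar_in => /orP [] /andP [/eqP Ha Hb].
  apply/negP => Hc.
  have Hcl : forall c d : 'I_n, nat_of_ord c != 0 -> erel Estar c d -> nat_of_ord d != 0.
    move=> c d _; rewrite /erel Estar_in => /orP [] /andP [H1 H2].
      by case/andP: H2 => H2 _; lia.
    by move/eqP: H1 => ->; lia.
  have Hb0 : nat_of_ord b != 0 by case/andP: Hb => Hb _; lia.
  by move: (fwd_closed Hcl Hb0 Hc); rewrite Ha eqxx.
apply/negP => Hc.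
have Hcl : forall c d : 'I_n, nat_of_ord c == C -> erel Estar c d -> nat_of_ord d == C.
  move=> c d /eqP Hcv; rewrite /erel Estar_in => /orP [] /andP [H1 H2].
    by move/eqP: H1; lia.
  by case/andP: H2; lia.
have Hb0 : nat_of_ord b == C by rewrite Ha.
move: (fwd_closed Hcl Hb0 Hc); case/andP: Hb => Hb1 Hb2; lia.
Qed.

Lemma Estar_minprop : minprop Estar.
Proof.
move=> a b; rewrite Estar_in => /orP [] /andP [/eqP Ha Hb].
  right; apply/eqP/cards1P; exists o0; apply/setP => u; rewrite !inE /=.
  case/andP: Hb => Hb1 Hb2.
  have -> : (nat_of_ord b == C) = false by apply/negbTE; lia.
  by rewrite -val_eqE /= Hb1 Hb2 !andbT orbF.
left; apply/eqP/cards1P; exists oC; apply/setP => u; rewrite !inE /=.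
have -> : (nat_of_ord a == 0) = false by case/andP: Hb => Hb1 _; apply/negbTE; lia.
by rewrite -val_eqE /= Hb /= andbT.
Qed.

Lemma Estar_nterminal : nterminal Estar = n - B.
Proof.
rewrite /nterminal.
have -> : [set v | terminal Estar v] = [set v : 'I_n | (B <= nat_of_ord v) && (nat_of_ord v < n)].
  by apply/setP => v; rewrite !inE Estar_term ltn_ord andbT.
rewrite card_range; lia.
Qed.

Lemma Estar_ninitial : ninitial Estar = n - (C.+1 - A).
Proof.
rewrite /ninitial.
have -> : [set v | initial Estar v] = ~: [set v : 'I_n | (A <= nat_of_ord v) && (nat_of_ord v < C.+1)].
  by apply/setP => v; rewrite !inE Estar_init.
have := cardsC [set v : 'I_n | (A <= nat_of_ord v) && (nat_of_ord v < C.+1)].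
rewrite card_range card_ord; lia.
Qed.

Lemma Estar_card : #|Estar| = (C - A) + (B - 1).
Proof.
set RA := [set v : 'I_n | (A <= nat_of_ord v) && (nat_of_ord v < C)].
set RB := [set v : 'I_n | (1 <= nat_of_ord v) && (nat_of_ord v < B)].
have HE : Estar = [set (o0, v) | v in RA] :|: [set (v, oC) | v in RB].
  apply/setP => [[a b]]; rewrite Estar_in !inE.
  have -> : ((a, b) \in [set (o0, v) | v in RA]) = (nat_of_ord a == 0) && (b \in RA).
    apply/imsetP/andP => [[v Hv [-> ->]]|[Ha Hb]]; first by split.
    by exists b => //; congr (_, _); apply: val_inj; apply/eqP.
  have -> : ((a, b) \in [set (v, oC) | v in RB]) = (nat_of_ord b == C) && (a \in RB).
    apply/imsetP/andP => [[v Hv [-> ->]]|[Ha Hb]]; first by split.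
    by exists a => //; congr (_, _); apply: val_inj; apply/eqP.
  by rewrite !inE.
have := cardsUI [set (o0, v) | v in RA] [set (v, oC) | v in RB].
have -> : [set (o0, v) | v in RA] :&: [set (v, oC) | v in RB] = set0.
  apply/setP => [[a b]]; rewrite !inE; apply/negP => /andP [/imsetP [v Hv [Ha Hb]] /imsetP [w Hw [Ha' Hb']]].
  by move: Hv; rewrite inE -Hb Hb' /=; lia.
rewrite cards0 addn0 -HE !card_imset; first last.
- by move=> u v [].
- by move=> u v [].
rewrite !card_range => ->; lia.
Qed.

Lemma Estar_items : #|Items Estar| <= 2.
Proof.
have := count_identity Estar_minprop.
rewrite Estar_card Estar_nterminal Estar_ninitial; lia.
Qed.

End Cons.

Lemma construction n x y : 1 <= x -> 1 <= y -> x.+2 <= n -> y.+2 <= n ->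
  exists E : {set 'I_n * 'I_n}, minimal_tdg x y E /\ #|Items E| <= 2.
Proof.
move=> Hx Hy Hxn Hyn.
pose B := n - y; pose C := n - minn x y; pose A := C.+1 + x - n.
have HA : 1 <= A by rewrite /A /C; lia.
have HAB : A < B by rewrite /A /B /C; lia.
have HBC : B <= C by rewrite /B /C; lia.
have HC : C < n by rewrite /C; lia.
exists (Estar n A B C); split; first last.
  exact: Estar_items.
apply: minprop_minimal; last exact: Estar_minprop.
split; first exact: Estar_acyclic.
rewrite (Estar_nterminal HA HAB HBC HC) (Estar_ninitial HA HAB HBC HC); split; rewrite /A /B /C; lia.
Qed.


Lemma struct_K2 n (E : {set 'I_n * 'I_n}) : acyclic E -> minprop E ->
   [/\ #|nontriv_comps E| <= 2,
       ((forall v : 'I_n, isolated E v) -> n = ninitial E /\ ninitial E = nterminal E),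
       (#|nontriv_comps E| = 2 -> forall v : 'I_n, ~~ interior E v) &
       (forall C : {set 'I_n}, nontriv_comps E = [set C] ->
          (forall w, w \in C -> ~~ interior E w)
          \/
          (exists u v : 'I_n,
             u \in C /\ v \in C /\ initial E u /\ terminal E v /\
             2 <= #|[set w in C | interior E w]| /\
             (forall w, w \in C -> interior E w -> adj E u w && adj E v w))
          \/
          (exists w : 'I_n,
             let P := [set a | (a, w) \in E] in
             let Q := [set b | (w, b) \in E] in
             [set w' in C | interior E w'] = [set w] /\
             P \subset [set a | initial E a] /\
             Q \subset [set b | terminal E b] /\
             0 < #|P| /\ 0 < #|Q| /\
             (1 < #|P| -> forall a b, a \in P -> adj E a b -> b = w) /\
             (1 < #|Q| -> forall a b, a \in Q -> adj E a b -> b = w)))]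
   <-> #|Items E| <= 2.
Proof.
move=> Hac Hm; split.
- case=> H1 _ H2 H3.
  case Hc: #|nontriv_comps E| => [|[|[|k]]].
  + by rewrite (Items_empty (nontriv0 Hc)).
  + move/eqP/cards1P: Hc => [C HC].
    case: (H3 C HC) => [Ha|[Hb|Hc]].
    * have Hni : forall v, ~~ interior E v.
        move=> v; apply/negP => Hv; move/negP: (Ha v (single_mem HC (interior_noniso Hv))).
        by apply.
      by apply: leq_trans (noint_card Hm Hni) _; rewrite HC cards1.
    * exact: (struct_b Hm HC Hb).
    * exact: (struct_c Hm HC Hc).
  + by apply: leq_trans (noint_card Hm (H2 Hc)) _; rewrite Hc.
  + by rewrite Hc in H1.
- move=> HK; split.
  + exact: leq_trans (nontriv_le_items E) HK.
  + move=> Hiso.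
    have HE : E = set0.
      apply/setP => [[a b]]; rewrite inE; apply/negP => Hab.
      by move: (Hiso a); rewrite (negbTE (noniso_adj (adj_edge Hab))).
    move: (ninitial_n E) (nterminal_n E); rewrite HE eqxx => /eqP -> /eqP ->; by [].
  + exact: K2_two Hac HK.
  + move=> C HC; exact: K2_single Hac HK C HC.
Qed.

Lemma max_iff_K2 n x y (E : {set 'I_n * 'I_n}) :
  1 <= x -> 1 <= y -> maxn x y <= n -> minimal_tdg x y E ->
  (forall E' : {set 'I_n * 'I_n}, minimal_tdg x y E' -> #|E'| <= #|E|)
   <-> #|Items E| <= 2.
Proof.
move=> Hx Hy Hn Hmin.
have Hm := minimal_minprop Hmin.
case: Hmin => [[Hac [HxE HyE]] _].
have HidE := count_identity Hm.
split => [Hmax|HK E' Hmin'].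
- case: (leqP (n.-1) x) => [Hx1|Hx2].
    have H : n.-1 <= ninitial E by rewrite HxE.
    exact: leq_trans (F4_init H) _.
  case: (leqP (n.-1) y) => [Hy1|Hy2].
    have H : n.-1 <= nterminal E by rewrite HyE.
    exact: leq_trans (F4_term H) _.
  have Hx3 : x.+2 <= n by move: Hx2 Hn; rewrite -subn1; lia.
  have Hy3 : y.+2 <= n by move: Hy2 Hn; rewrite -subn1; lia.
  have [E' [Hmin' HK']] := construction Hx Hy Hx3 Hy3.
  have Hm' := minimal_minprop Hmin'.
  case: (Hmin') => [[Hac' [HxE' HyE']] _].
  have HidE' := count_identity Hm'.
  have := Hmax _ Hmin'; rewrite HxE HyE in HidE; rewrite HxE' HyE' in HidE'; lia.
- have Hm' := minimal_minprop Hmin'.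
  case: (Hmin') => [[Hac' [HxE' HyE']] _].
  have HidE' := count_identity Hm'.
  rewrite HxE HyE in HidE; rewrite HxE' HyE' in HidE'.
  suff : #|Items E| <= #|Items E'| by lia.
  case: (ltnP 1 #|Items E'|) => H1; first by lia.
  have H2 : #|Items E| <= 1.
    case: (K1_bound H1); rewrite ?HxE' ?HyE' => H.
      by apply: F4_term; rewrite HyE.
    by apply: F4_init; rewrite HxE.
  case: (posnP #|Items E'|) => H3; last by lia.
  have HE' : E' = set0.
    apply/setP => [[a b]]; rewrite inE; apply/negP => Hab.
    by move: (Items_nonempty Hab); rewrite H3.
  have := ninitial_n E'; rewrite {2}HE' eqxx HxE' => /eqP Hxn.
  have := ninitial_n E; rewrite HxE Hxn eqxx => /esym/eqP HE.
  by rewrite (Items_empty HE).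
Qed.

Theorem mainTheorem3 (x y n : nat) (E : {set 'I_n * 'I_n}) :
  1 <= x -> 1 <= y -> maxn x y <= n ->
  minimal_tdg x y E ->
  ((forall E' : {set 'I_n * 'I_n}, minimal_tdg x y E' -> #|E'| <= #|E|)
   <->
   [/\ #|nontriv_comps E| <= 2,
       (* (1) all vertices isolated *)
       ((forall v : 'I_n, isolated E v) -> n = x /\ x = y),
       (* (2) two non-trivial components *)
       (#|nontriv_comps E| = 2 -> forall v : 'I_n, ~~ interior E v) &
       (* (3) exactly one non-trivial component C *)
       (forall C : {set 'I_n}, nontriv_comps E = [set C] ->
          (* (a) *)
          (forall w, w \in C -> ~~ interior E w)
          \/
          (* (b) *)
          (exists u v : 'I_n,
             u \in C /\ v \in C /\ initial E u /\ terminal E v /\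
             2 <= #|[set w in C | interior E w]| /\
             (forall w, w \in C -> interior E w -> adj E u w && adj E v w))
          \/
          (* (c) *)
          (exists w : 'I_n,
             let P := [set a | (a, w) \in E] in
             let Q := [set b | (w, b) \in E] in
             [set w' in C | interior E w'] = [set w] /\
             P \subset [set a | initial E a] /\
             Q \subset [set b | terminal E b] /\
             0 < #|P| /\ 0 < #|Q| /\
             (1 < #|P| -> forall a b, a \in P -> adj E a b -> b = w) /\
             (1 < #|Q| -> forall a b, a \in Q -> adj E a b -> b = w)))]).
Proof.
move=> Hx Hy Hn Hmin.
have Hmin0 := Hmin.
case: Hmin0 => [[Hac [HxE HyE]] _].
have Hm := minimal_minprop Hmin.
have H1 := max_iff_K2 Hx Hy Hn Hmin.
have H2 := struct_K2 Hac Hm.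
rewrite HxE HyE in H2.
split => H; [apply/H2/H1 | apply/H1/H2]; exact: H.
Qed.
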